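(* $c(7)\ge 5$.
   Context: $\mathbb{F}_q$ is the finite field with $q$ elements. Hamming distance $d(u,v)=|\{i:u_i\ne v_i\}|$ on $\mathbb{F}_q^3$; $B(u)=\{v:d(u,v)\le1\}$; $E(u)=\bigcup_{\lambda\in\mathbb{F}_q}B(\lambda u)$. A set $\mathcal{H}\subseteq\mathbb{F}_q^3$ is a short covering if $\bigcup_{h\in\mathcal{H}}E(h)=\mathbb{F}_q^3$; $c(q)$ is the minimum cardinality of a short covering of $\mathbb{F}_q^3$. *)

(* Defs.v *)
From mathcomp Require Import all_boot all_order all_algebra.
Set Implicit Arguments. Unset Strict Implicit. Unset Printing Implicit Defensive.
Import GRing.Theory.
Local Open Scope ring_scope.

Section ShortCovering.
Variable F : finFieldType.

Definition hamming (u v : 'rV[F]_3) : nat := #|[set i : 'I_3 | u 0 i != v 0 i]|.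

Definition ball (u : 'rV[F]_3) : {set 'rV[F]_3} := [set v | (hamming u v <= 1)%N].

Definition Eball (u : 'rV[F]_3) : {set 'rV[F]_3} :=
  \bigcup_(lam : F) ball (lam *: u).

Definition short_covering (H : {set 'rV[F]_3}) : bool :=
  \bigcup_(h in H) Eball h == [set: 'rV[F]_3].

(* c(q): minimum cardinality of a short covering (the full space is one,
   so the default value #|F^3| is never strictly below the true minimum) *)
Definition c_min : nat :=
  \big[minn/#|[set: 'rV[F]_3]|]_(H : {set 'rV[F]_3} | short_covering H) #|H|.
End ShortCovering.

(* Main.v *)
Require Import Defs.
From mathcomp Require Import all_boot all_order all_algebra.
Import GRing.Theory.
Local Open Scope ring_scope.

Definition tri := (nat * nat * nat)%type.
Definition cscale (m : nat) (u : tri) : tri :=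
  let: (a, b, c) := u in ((m * a) %% 7, (m * b) %% 7, (m * c) %% 7)%N.
Definition chamming (u v : tri) : nat :=
  let: (a, b, c) := u in let: (a', b', c') := v in
  addn (addn (a != a') (b != b')) (c != c').
Definition ccov (u p : tri) : bool :=
  has (fun l => chamming (cscale l u) p <= 1)%N (iota 0 7).
Definition allpts : seq tri :=
  flatten [seq [seq (a, b, c) | b <- iota 0 7, c <- iota 0 7] | a <- iota 0 7].
Definition w3 (u : tri) : bool := let: (a, b, c) := u in [&& a != 0, b != 0 & c != 0]%N.
Definition allpts' := [seq x <- allpts | w3 x] ++ [seq x <- allpts | ~~ w3 x].
Definition cnorm (u : tri) : bool := let: (a, b, c) := u in
  ((a == 1) || ((a == 0) && ((b == 1) || ((b == 0) && ((c == 1) || (c == 0))))))%N.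
Definition creps := [seq x <- allpts | cnorm x].
Definition crow (r : tri) := [seq ccov r q | q <- allpts'].
Definition ctable := [seq crow r | r <- creps].
Fixpoint andn (u s : seq bool) : seq bool :=
  match u, s with
  | a :: u', b :: s' => (a && ~~ b) :: andn u' s'
  | _, _ => u
  end.
Fixpoint search (T : seq (seq bool)) (n : nat) (unc : seq bool) : bool :=
  if has id unc then
    match n with
    | 0 => true
    | n'.+1 => let k := find id unc in
        all (fun s => if nth false s k then search T n' (andn unc s) else true) T
    end
  else false.

Lemma search_table : search ctable 4 (nseq (size allpts') true).
Proof. by vm_compute. Qed.

Lemma norm_ok : all (fun u => has (fun m => cscale m u \in creps) (iota 1 6)) allpts.
Proof. by vm_compute. Qed.

Lemma range_ok : all (fun x : tri => let: (a, b, c) := x in [&& a < 7, b < 7 & c < 7]%N) allpts'.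
Proof. by vm_compute. Qed.

Lemma nth_andn u s i : nth false (andn u s) i = nth false u i && ~~ nth false s i.
Proof.
elim: u s i => [|a u IH] [|b s] [|i] //=; rewrite ?andbT ?nth_nil ?andbT //.
Qed.

Lemma search_ok T n unc : search T n unc -> forall l, (size l <= n)%N ->
  {subset l <= T} -> exists i, nth false unc i && all (fun s => ~~ nth false s i) l.
Proof.
elim: n unc => [|n IH] unc /=.
  case hu: (has id unc) => // _ [|//] _ _.
  by exists (find id unc); rewrite (nth_find false hu).
case hu: (has id unc) => // /allP hall l hl hsub.
have hk := nth_find false hu.
case hl2: (has (fun s => nth false s (find id unc)) l); last first.
  exists (find id unc); rewrite hk /=; apply/allP => s hs.
  by move/hasPn: hl2 => /(_ s hs) ->.
case/hasP: hl2 => s hs hsk.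
have := hall s (hsub s hs); rewrite hsk => /IH /(_ (rem s l)).
case.
- by rewrite size_rem // -subn1 leq_subLR add1n.
- by move=> t /mem_rem /hsub.
move=> i /andP[]; rewrite nth_andn => /andP[hi hsi] hrest.
exists i; rewrite hi /= (perm_all _ (perm_to_rem hs)) /= hsi.
exact: hrest.
Qed.

Definition V := 'rV['F_7]_3.
Definition c0 : 'I_3 := ord0.
Definition c1 : 'I_3 := lift ord0 ord0.
Definition c2 : 'I_3 := lift ord0 (lift ord0 ord0).
Definition enc (u : V) : tri := (val (u 0 c0), val (u 0 c1), val (u 0 c2)).

Lemma hamE (u v : V) : hamming u v = chamming (enc u) (enc v).
Proof.
rewrite /hamming -sum1_card big_mkcond /= !big_ord_recl big_ord0 /= !inE.
rewrite addn0 !addnA.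
by case: (u 0 c0 != _); case: (u 0 c1 != _); case: (u 0 c2 != _).
Qed.

Lemma encZ (lam : 'F_7) (u : V) : enc (lam *: u) = cscale (val lam) (enc u).
Proof. by rewrite /enc !mxE. Qed.

Lemma val_inord7 (m : nat) : (m < 7)%N -> val (inord m : 'F_7) = m.
Proof. move=> h. exact: (@inordK 6 m h). Qed.

Lemma Eball_cov (u p : V) : (p \in Eball u) = ccov (enc u) (enc p).
Proof.
apply/bigcupP/hasP.
- case=> lam _; rewrite inE hamE encZ => h.
  by exists (val lam) => //; rewrite mem_iota /= ltn_ord.
- case=> l; rewrite mem_iota => /andP[_ hl] h.
  exists (inord l) => //; rewrite inE hamE encZ val_inord7 //.
Qed.

Lemma Eball_scale (mu : 'F_7) (u p : V) : mu != 0 ->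
  (p \in Eball (mu *: u)) = (p \in Eball u).
Proof.
move=> hmu; apply/bigcupP/bigcupP => [[lam _ h]|[lam _ h]].
- by exists (lam * mu) => //; rewrite -scalerA.
- by exists (lam / mu) => //; rewrite scalerA mulfVK.
Qed.

Lemma mem_allpts a b c : (a < 7)%N -> (b < 7)%N -> (c < 7)%N -> (a, b, c) \in allpts.
Proof.
move=> ha hb hc; apply/flattenP.
exists [seq (a, b, c) | b <- iota 0 7, c <- iota 0 7].
  by apply: (map_f (fun a => [seq (a, b, c) | b <- iota 0 7, c <- iota 0 7])); rewrite mem_iota.
by apply: (allpairs_f (fun b c => (a, b, c))); rewrite mem_iota.
Qed.

Lemma rep_exists (u : V) :
  exists2 r, r \in creps & forall p, (p \in Eball u) = ccov r (enc p).
Proof.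
have hu : enc u \in allpts by apply: mem_allpts; apply: ltn_ord.
have := allP norm_ok _ hu => /hasP [m]; rewrite mem_iota => /andP[h1 h2] hm.
exists (cscale m (enc u)) => // p.
have hm7 : (m < 7)%N by apply: leq_trans h2 _.
have hmu : (inord m : 'F_7) != 0.
  apply/eqP => /(congr1 val); rewrite val_inord7 //= => hm0.
  by rewrite hm0 in h1.
by rewrite -(@Eball_scale (inord m) u p hmu) Eball_cov encZ val_inord7.
Qed.

Definition dec (x : tri) : V :=
  \row_(j < 3) (inord (nth 0%N [:: x.1.1; x.1.2; x.2] j) : 'F_7).

Lemma enc_dec a b c : (a < 7)%N -> (b < 7)%N -> (c < 7)%N -> enc (dec (a, b, c)) = (a, b, c).
Proof. by move=> ha hb hc; rewrite /enc !mxE /= !val_inord7. Qed.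

Lemma reps_list (s : seq V) : exists l : seq tri,
  [/\ size l = size s, {subset l <= creps} &
   forall h, h \in s -> exists2 r, r \in l & forall p, (p \in Eball h) = ccov r (enc p)].
Proof.
elim: s => [|u s [l [hsz hsub hrep]]]; first by exists [::]; split.
have [r hr hrE] := rep_exists u.
exists (r :: l); split => /=; first by rewrite hsz.
  by move=> t; rewrite inE => /orP[/eqP ->|/hsub].
move=> h; rewrite inE => /orP[/eqP ->|/hrep [r' hr' E]].
  by exists r => //; rewrite inE eqxx.
by exists r' => //; rewrite inE hr' orbT.
Qed.

Lemma small_not_cover (H : {set V}) : short_covering H -> (5 <= #|H|)%N.
Proof.
move=> hcov; rewrite leqNgt; apply/negP => hlt.
have [l [hsz hsub hrep]] := reps_list (enum H).
have := @search_ok _ _ _ search_table (map crow l).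
case.
- by rewrite size_map hsz -cardE -ltnS.
- by move=> t /mapP [r hr ->]; apply: map_f; apply: hsub.
move=> i /andP [hi hall].
have hilt : (i < size allpts')%N by move: hi; rewrite nth_nseq; case: ifP.
have hx : nth (0, 0, 0)%N allpts' i \in allpts' := mem_nth _ hilt.
move: (allP range_ok _ hx).
case ex: (nth (0, 0, 0)%N allpts' i) => [[a b] c] /and3P [ha hb hc].
have hp : enc (dec (a, b, c)) = nth (0, 0, 0)%N allpts' i by rewrite ex enc_dec.
have : dec (a, b, c) \in \bigcup_(h in H) Eball h by rewrite (eqP hcov) inE.
case/bigcupP => h hH hph.
have [r hr hrE] := hrep h ltac:(by rewrite mem_enum).
move: hph; rewrite hrE hp.
have := allP hall (crow r) (map_f crow hr).
by rewrite /crow (nth_map (0, 0, 0)%N) // => /negbTE ->.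
Qed.

Theorem proposition19 : (5 <= c_min 'F_7)%N.
Proof.
rewrite /c_min; apply: (big_ind (fun x => 5 <= x)%N).
- by rewrite cardsT card_mx card_Fp.
- by move=> x y hx hy; rewrite leq_min hx hy.
- by move=> H; apply: small_not_cover.
Qed.
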